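(* In the virtually-$\mathbb{Z}$ setting described in the context, let $\Phi$ be a cellular automaton on $A^G$ with neighborhood $S$ and $\Delta=\max\{\mathrm{imp}(s):s\in S\}$. For $i=1,2$ let $u_i$ be a word with domain $L_i=V_{[p_i,q_i]}$ which is $V_i$-blocking for $\Phi$, where $V_i=V_{[a_i,b_i]}$. Suppose $l(V_i)\geq\Delta$ for $i=1,2$, $q_1<p_2$ and $a_1\leq b_2$. Let $x\in A^G$ satisfy $x|_{L_1}=u_1$ and $x|_{L_2}=u_2$, and let $u=x|_L$ where $L=V_{[p_1,q_2]}$. Then $u$ is $V$-blocking for $\Phi$, where $V=V_{[a_1,b_2]}$.
   Context: $G$ is a finitely generated group, $A$ a finite alphabet, $H\leq G$ a subgroup of finite index and $\varphi:H\to\mathbb{Z}$ a group isomorphism. $F\subseteq G$ is a finite set with $1_G\in F$ containing exactly one element of each right coset $Hg$, so every $g\in G$ decomposes uniquely as $g=zf$ with $z\in H$, $f\in F$. Define $p:G\to\mathbb{Z}$ by $p(zf)=\varphi(z)$. For $X\subseteq\mathbb{Z}$, $V_X=p^{-1}(X)$; $V_{\{k\}}$ is the $k$-th vertebra; $V_X$ is a section if $X=[a,b]$ is a finite integer interval, with length $l(V_{[a,b]})=b-a+1$. For $s\in G$, $\mathrm{imp}(s)=\max\{|p(gs)-p(g)|:g\in V_{\{k\}}\}$, which is independent of $k$. A cellular automaton $\Phi$ with neighborhood $S\subseteq G$ finite and local map $\mu:A^S\to A$ is $\Phi(x)(g)=\mu(s\mapsto x(gs))$. For finite $V\subseteq G$,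 a pattern $u\in A^L$ ($L\subseteq G$ finite) is $V$-blocking for $\Phi$ if for all $x,y\in A^G$ with $x|_L=y|_L=u$ one has $\Phi^t(x)|_V=\Phi^t(y)|_V$ for all $t\in\mathbb{N}$. *)

(* Defs.v *)
From Stdlib Require Import ZArith List Lia.
Open Scope Z_scope.

Section Defs.
Context {G : Type} (mul : G -> G -> G) (one : G) (inv : G -> G).

Definition group_axioms : Prop :=
  (forall x y z, mul x (mul y z) = mul (mul x y) z) /\
  (forall x, mul one x = x) /\ (forall x, mul x one = x) /\
  (forall x, mul (inv x) x = one) /\ (forall x, mul x (inv x) = one).

Inductive generated (gens : list G) : G -> Prop :=
| gen_one : generated gens one
| gen_mul : forall s g, In s gens -> generated gens g -> generated gens (mul g s)
| gen_mulinv : forall s g, In s gens -> generated gens g -> generated gens (mul g (inv s)).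

Definition finitely_generated : Prop :=
  exists gens : list G, forall g, generated gens g.

Definition subgroup (H : G -> Prop) : Prop :=
  H one /\ (forall x y, H x -> H y -> H (mul x y)) /\ (forall x, H x -> H (inv x)).

Definition iso_to_Z (H : G -> Prop) (phi : G -> Z) : Prop :=
  (forall x y, H x -> H y -> phi (mul x y) = phi x + phi y) /\
  (forall x y, H x -> H y -> phi x = phi y -> x = y) /\
  (forall n, exists z, H z /\ phi z = n).

(* F contains exactly one element of each right coset H g *)
Definition right_transversal (H : G -> Prop) (F : list G) : Prop :=
  (forall g, exists f, In f F /\ H (mul f (inv g))) /\
  (forall f1 f2, In f1 F -> In f2 F -> H (mul f1 (inv f2)) -> f1 = f2).

Definition is_projection (H : G -> Prop) (phi : G -> Z) (F : list G) (p : G -> Z) : Prop :=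
  forall z f, H z -> In f F -> p (mul z f) = phi z.

Definition section (p : G -> Z) (a b : Z) : G -> Prop := fun g => a <= p g <= b.
Definition sec_length (a b : Z) : Z := b - a + 1.

Definition is_imp (p : G -> Z) (s : G) (n : Z) : Prop :=
  (exists g, p g = 0 /\ n = Z.abs (p (mul g s) - p g)) /\
  (forall g, p g = 0 -> Z.abs (p (mul g s) - p g) <= n).

Definition is_Delta (p : G -> Z) (S : list G) (D : Z) : Prop :=
  (forall s, In s S -> exists n, is_imp p s n /\ n <= D) /\
  (S <> nil -> exists s n, In s S /\ is_imp p s n /\ n = D) /\
  (S = nil -> D = 0).

Definition CA {A : Type} (S : list G) (mu : ({s : G | In s S} -> A) -> A)
  (x : G -> A) : G -> A :=
  fun g => mu (fun s => x (mul g (proj1_sig s))).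

(* u (only its values on L matter) is a pattern on L that is V-blocking *)
Definition blocking {A : Type} (Phi : (G -> A) -> (G -> A))
  (V L : G -> Prop) (u : G -> A) : Prop :=
  forall x y : G -> A,
    (forall g, L g -> x g = u g) -> (forall g, L g -> y g = u g) ->
    forall (t : nat) g, V g -> Nat.iter t Phi x g = Nat.iter t Phi y g.

End Defs.

(* Main.v *)
Require Import Defs.
From Stdlib Require Import ZArith List Lia FunctionalExtensionality.
Open Scope Z_scope.

Section Aux.
Context {G : Type} (mul : G -> G -> G) (one : G) (inv : G -> G)
  (HG : group_axioms mul one inv) (H : G -> Prop) (HH : subgroup mul one inv H)
  (phi : G -> Z) (Hphi : iso_to_Z mul H phi) (F : list G)
  (HF : right_transversal mul inv H F) (p : G -> Z) (Hp : is_projection mul H phi F p).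

Lemma inv_uniq a b : mul a b = one -> a = inv b.
Proof.
  destruct HG as (Ha & Hl & Hr & Hil & Hir).
  intro E. rewrite <- (Hr a), <- (Hir b), Ha, E, Hl. reflexivity.
Qed.

Lemma decomp g : exists z f, H z /\ In f F /\ g = mul z f.
Proof.
  destruct HG as (Ha & Hl & Hr & Hil & Hir).
  destruct HH as (H1 & HM & HI).
  destruct (proj1 HF g) as (f & Hf & Hz).
  exists (mul g (inv f)), f. split; [|split]; auto.
  - replace (mul g (inv f)) with (inv (mul f (inv g))); [now apply HI|].
    symmetry; apply inv_uniq.
    rewrite <- Ha, (Ha (inv f)), Hil, Hl, Hir. reflexivity.
  - rewrite <- Ha, Hil, Hr. reflexivity.
Qed.

Lemma phi_one : phi one = 0.
Proof.
  destruct HG as (Ha & Hl & Hr & Hil & Hir).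
  destruct HH as (H1 & HM & HI).
  pose proof (proj1 Hphi one one H1 H1) as E. rewrite Hl in E. lia.
Qed.

Lemma disp g s n : is_imp mul p s n -> Z.abs (p (mul g s) - p g) <= n.
Proof.
  intros [_ Hn].
  destruct HG as (Ha & Hl & Hr & Hil & Hir).
  destruct HH as (H1 & HM & HI).
  destruct (decomp g) as (z & f & Hz & Hf & ->).
  destruct (decomp (mul f s)) as (z' & f' & Hz' & Hf' & E).
  assert (pf : p f = 0).
  { rewrite <- (Hl f), Hp; auto; apply phi_one. }
  specialize (Hn f pf). rewrite E in Hn.
  rewrite <- Ha, E, Ha, !Hp; auto.
  rewrite Hp in Hn; auto. rewrite (proj1 Hphi); auto. lia.
Qed.
End Aux.

Lemma block_sub {G A : Type} (mul : G -> G -> G) (S : list G) mu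
  (p : G -> Z) a b c d (u : G -> A)
  (Hb : blocking (CA mul S mu) (section p a b) (section p c d) u) g :
  a <= p g <= b -> (c <= p g <= d) \/ (forall x y : A, x = y).
Proof.
  intros Hg.
  destruct (Z_le_dec c (p g)); destruct (Z_le_dec (p g) d); try (left; lia); right;
  intros x y;
  pose proof (Hb (fun h => if Z.eq_dec (p h) (p g) then x else u h)
                 (fun h => if Z.eq_dec (p h) (p g) then y else u h)) as K;
  simpl in K;
  (assert (K' : x = y); [
    specialize (K ltac:(intros h Hh; unfold section in Hh; destruct Z.eq_dec; [lia|auto])
                  ltac:(intros h Hh; unfold section in Hh; destruct Z.eq_dec; [lia|auto]) 0%nat g Hg);
    simpl in K; destruct Z.eq_dec; [exact K| lia] | exact K']).
Qed.

Theorem lemma4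
  (G : Type) (mul : G -> G -> G) (one : G) (inv : G -> G)
  (HG : group_axioms mul one inv) (Hfg : finitely_generated mul one inv)
  (A : Type) (HA : exists enumA : list A, forall a : A, In a enumA)
  (H : G -> Prop) (HH : subgroup mul one inv H)
  (phi : G -> Z) (Hphi : iso_to_Z mul H phi)
  (F : list G) (HF1 : In one F) (HF : right_transversal mul inv H F)
  (p : G -> Z) (Hp : is_projection mul H phi F p)
  (S : list G) (mu : ({s : G | In s S} -> A) -> A)
  (Delta : Z) (HDelta : is_Delta mul p S Delta)
  (p1 q1 a1 b1 p2 q2 a2 b2 : Z)
  (Hpq1 : p1 <= q1) (Hpq2 : p2 <= q2) (Hab1 : a1 <= b1) (Hab2 : a2 <= b2)
  (u1 u2 : G -> A)
  (Hu1 : blocking (CA mul S mu) (section p a1 b1) (section p p1 q1) u1)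
  (Hu2 : blocking (CA mul S mu) (section p a2 b2) (section p p2 q2) u2)
  (Hl1 : sec_length a1 b1 >= Delta) (Hl2 : sec_length a2 b2 >= Delta)
  (Hq1p2 : q1 < p2) (Ha1b2 : a1 <= b2)
  (x : G -> A)
  (Hx1 : forall g, section p p1 q1 g -> x g = u1 g)
  (Hx2 : forall g, section p p2 q2 g -> x g = u2 g) :
  blocking (CA mul S mu) (section p a1 b2) (section p p1 q2) x.
Proof.
  unfold sec_length in *.
  intros X Y HX HY t.
  assert (V1 : forall t g, section p a1 b1 g ->
             Nat.iter t (CA mul S mu) X g = Nat.iter t (CA mul S mu) Y g).
  { intros t' g' Hg'. refine (Hu1 X Y _ _ t' g' Hg'); intros h Hh; unfold section in *.
    - rewrite HX by lia; apply Hx1; auto.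
    - rewrite HY by lia; apply Hx1; auto. }
  assert (V2 : forall t g, section p a2 b2 g ->
             Nat.iter t (CA mul S mu) X g = Nat.iter t (CA mul S mu) Y g).
  { intros t' g' Hg'. refine (Hu2 X Y _ _ t' g' Hg'); intros h Hh; unfold section in *.
    - rewrite HX by lia; apply Hx2; auto.
    - rewrite HY by lia; apply Hx2; auto. }
  assert (Ex : forall k, exists g, p g = k).
  { intro k. destruct (proj2 (proj2 Hphi) k) as (z & Hz & E).
    exists (mul z one). rewrite Hp; auto. }
  induction t as [|t IH]; intros g Hg; unfold section in Hg.
  - destruct (Z_le_dec (p g) b1) as [h1|h1]. { apply V1; red; lia. }
    destruct (Z_le_dec a2 (p g)) as [h2|h2]. { apply V2; red; lia. }
    destruct (Ex a1) as (ga & Ea). destruct (Ex b2) as (gb & Eb).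
    destruct (block_sub mul S mu p _ _ _ _ u1 Hu1 ga ltac:(lia)) as [Ka|Ka]; [|apply Ka].
    destruct (block_sub mul S mu p _ _ _ _ u2 Hu2 gb ltac:(lia)) as [Kb|Kb]; [|apply Kb].
    simpl. rewrite HX, HY; auto; red; lia.
  - destruct (Z_le_dec (p g) b1) as [h1|h1]. { apply V1; red; lia. }
    destruct (Z_le_dec a2 (p g)) as [h2|h2]. { apply V2; red; lia. }
    simpl. unfold CA at 1 3. f_equal. apply functional_extensionality.
    intros [s Hs]; simpl. apply IH. red.
    destruct (proj1 HDelta s Hs) as (n & Hn & Hnd).
    pose proof (disp mul one inv HG H HH phi Hphi F HF p Hp g s n Hn). lia.
Qed.
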